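(* Let $\varphi,\phi$ be GFG-QPTL formulas. Then $\varphi$ is $\exists\forall$-satisfiable iff $\varphi$ is $\forall\exists$-satisfiable. Moreover, $\varphi\Rightarrow^{\exists\forall}\phi$ iff $\varphi\Rightarrow^{\forall\exists}\phi$, and $\varphi\equiv^{\exists\forall}\phi$ iff $\varphi\equiv^{\forall\exists}\phi$.
   Context: Let $AP$ be a set of atomic propositions and $\mathbb B=\{\top,\bot\}$. A temporal valuation is a function $f:\mathbb N\to\mathbb B$. An assignment is a partial function $\chi:AP\rightharpoonup(\mathbb N\to\mathbb B)$; $\mathrm{Asg}$ is the set of all assignments, $\mathrm{Asg}(P)$ the set of assignments with domain exactly $P\subseteq AP$. For an assignment $\chi$, $p\in AP$ and a temporal valuation $f$, $\chi[p\mapsto f]$ is the assignment that agrees with $\chi$ except that it maps $p$ to $f$. A hyperassignment is a set $\mathcal X$ with $\emptyset\neq\mathcal X\subseteq 2^{\mathrm{Asg}(P)}$ and $\emptyset\notin\mathcal X$, for some $P\subseteq AP$; this $P$ is denoted $\mathrm{ap}(\mathcal X)$. $\mathrm{HAsg}$ is the set of all hyperassignments, $\mathrm{HAsg}(P)$ those with $\mathrm{ap}(\mathcal X)=P$, and $\mathrm{HAsg}_\supseteq(P)$ those with $\mathrm{ap}(\mathcal X)\supseteq P$. A choice function for $\mathcal X$ is a map $c:\mathcal X\to\mathrm{Asg}$ with $c(X)\in X$ for all $X\in\mathcal X$. The dual of $\mathcal X$ is $\overline{\mathcal X}=\{\mathrm{img}(c): c\text{ a choice function for }\mathcal X\}$.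 $\mathrm{par}(\mathcal X)$ is the set of pairs $(\mathcal X_1,\mathcal X_2)$ of (possibly empty) subsets of $\mathcal X$ with $\mathcal X_1\cap\mathcal X_2=\emptyset$ and $\mathcal X_1\cup\mathcal X_2=\mathcal X$. A functor over $P\subseteq AP$ is a function $F:\mathrm{Asg}(P)\to(\mathbb N\to\mathbb B)$; $\mathrm{Fnc}(P)$ is the set of all of them. $\mathrm{ext}(\chi,F,p)=\chi[p\mapsto F(\chi)]$ and $\mathrm{ext}(X,F,p)=\{\mathrm{ext}(\chi,F,p):\chi\in X\}$. For $\chi_1,\chi_2\in\mathrm{Asg}(P)$, $p\in P$, $k\in\mathbb N$: $\chi_1\approx^{>k}_p\chi_2$ iff $\chi_1(q)=\chi_2(q)$ for all $q\in P\setminus\{p\}$ and $\chi_1(p)(t)=\chi_2(p)(t)$ for all $t\le k$; $\chi_1\approx^{\ge k}_p\chi_2$ is defined the same way with $t<k$ in place of $t\le k$. $F\in\mathrm{Fnc}(P)$ is behavioral (resp. strongly behavioral) w.r.t. $p\in P$ if $F(\chi_1)(k)=F(\chi_2)(k)$ for all $k\in\mathbb N$ and all $\chi_1,\chi_2$ with $\chi_1\approx^{>k}_p\chi_2$ (resp. $\chi_1\approx^{\ge k}_p\chi_2$). A quantifier specification is a pair $\sigma=\langle P_B,P_S\rangle$ of subsets of $AP$; $\mathrm{Fnc}_\sigma(P)$ is the set of $F\in\mathrm{Fnc}(P)$ that are behavioral w.r.t. every $p\in P_B\cap P$ and strongly behavioral w.r.t. every $p\in P_S\cap P$. $\mathrm{ext}_\sigma(\mathcal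 X,p)=\{\mathrm{ext}(X,F,p):X\in\mathcal X,\ F\in\mathrm{Fnc}_\sigma(\mathrm{ap}(\mathcal X))\}$. GFG-QPTL formulas are generated by $\varphi::=\psi\mid\neg\varphi\mid\varphi\wedge\varphi\mid\varphi\vee\varphi\mid\exists p{:}\sigma.\varphi\mid\forall p{:}\sigma.\varphi$, where $\psi$ is an LTL formula over $AP$, $p\in AP$ and $\sigma$ a quantifier specification; we also write $\exists^\sigma p.\varphi$, $\forall^\sigma p.\varphi$. QPTL formulas are those in which every specification is $\langle\emptyset,\emptyset\rangle$. $\mathrm{free}(\varphi)$ is the set of free propositions. $\chi\models_{LTL}\psi$ iff the infinite word whose $t$-th letter is the valuation $q\mapsto\chi(q)(t)$ satisfies $\psi$ in the standard LTL sense. Alternation flags are $\exists\forall$ and $\forall\exists$; $\bar\alpha$ is the flag different from $\alpha$. For a GFG-QPTL formula $\varphi$, $\mathcal X\in\mathrm{HAsg}_\supseteq(\mathrm{free}(\varphi))$ and flag $\alpha$, $\mathcal X\models^\alpha\varphi$ is defined inductively: (1) for LTL $\psi$: $\mathcal X\models^{\exists\forall}\psi$ iff there is $X\in\mathcal X$ with $\chi\models_{LTL}\psi$ for all $\chi\in X$; $\mathcal X\models^{\forall\exists}\psi$ iff for every $X\in\mathcal X$ there is $\chi\in X$ with $\chi\models_{LTL}\psi$; (2) $\mathcal X\models^\alpha\neg\phi$ iff not $\mathcal X\models^{\bar\alpha}\phi$; (3) $\mathcal X\models^{\exists\forall}\phi_1\wedge\phi_2$ iff for every $(\mathcal X_1,\mathcal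 X_2)\in\mathrm{par}(\mathcal X)$, either ($\mathcal X_1\ne\emptyset$ and $\mathcal X_1\models^{\exists\forall}\phi_1$) or ($\mathcal X_2\ne\emptyset$ and $\mathcal X_2\models^{\exists\forall}\phi_2$); $\mathcal X\models^{\forall\exists}\phi_1\wedge\phi_2$ iff $\overline{\mathcal X}\models^{\exists\forall}\phi_1\wedge\phi_2$; (4) $\mathcal X\models^{\forall\exists}\phi_1\vee\phi_2$ iff there is $(\mathcal X_1,\mathcal X_2)\in\mathrm{par}(\mathcal X)$ such that ($\mathcal X_1\neq\emptyset$ implies $\mathcal X_1\models^{\forall\exists}\phi_1$) and ($\mathcal X_2\neq\emptyset$ implies $\mathcal X_2\models^{\forall\exists}\phi_2$); $\mathcal X\models^{\exists\forall}\phi_1\vee\phi_2$ iff $\overline{\mathcal X}\models^{\forall\exists}\phi_1\vee\phi_2$; (5) $\mathcal X\models^{\exists\forall}\exists p{:}\sigma.\phi$ iff $\mathrm{ext}_\sigma(\mathcal X,p)\models^{\exists\forall}\phi$; $\mathcal X\models^{\forall\exists}\exists p{:}\sigma.\phi$ iff $\overline{\mathcal X}\models^{\exists\forall}\exists p{:}\sigma.\phi$; (6) $\mathcal X\models^{\forall\exists}\forall p{:}\sigma.\phi$ iff $\mathrm{ext}_\sigma(\mathcal X,p)\models^{\forall\exists}\phi$; $\mathcal X\models^{\exists\forall}\forall p{:}\sigma.\phi$ iff $\overline{\mathcal X}\models^{\forall\exists}\forall p{:}\sigma.\phi$. A GFG-QPTL formula $\varphi$ is $\alpha$-satisfiable if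 $\mathcal X\models^\alpha\varphi$ for some $\mathcal X\in\mathrm{HAsg}(\mathrm{free}(\varphi))$. $\varphi\Rightarrow^\alpha\phi$ ($\alpha$-implication) holds iff $\mathrm{free}(\varphi)=\mathrm{free}(\phi)$ and for all $\mathcal X\in\mathrm{HAsg}_\supseteq(\mathrm{free}(\varphi))$, $\mathcal X\models^\alpha\varphi$ implies $\mathcal X\models^\alpha\phi$; $\varphi\equiv^\alpha\phi$ ($\alpha$-equivalence) holds iff $\mathrm{free}(\varphi)=\mathrm{free}(\phi)$ and for all such $\mathcal X$, $\mathcal X\models^\alpha\varphi$ iff $\mathcal X\models^\alpha\phi$. *)

(* Defs.v *)
From Stdlib Require Import Arith ClassicalEpsilon.

Set Implicit Arguments.

Section GFG.
Variable AP : Type.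

Definition tval := nat -> bool.
Definition asg := AP -> option tval.
Definition aset := asg -> Prop.
Definition hset := aset -> Prop.

(* value of proposition q at time t (false outside the domain) *)
Definition val (chi : asg) (q : AP) (t : nat) : bool :=
  match chi q with Some f => f t | None => false end.

Definition inAsg (P : AP -> Prop) (chi : asg) : Prop :=
  forall q, P q <-> chi q <> None.

Definition upd (chi : asg) (p : AP) (f : tval) : asg :=
  fun q => if excluded_middle_informative (q = p) then Some f else chi q.

Definition isHAsg (P : AP -> Prop) (XX : hset) : Prop :=
  (exists X, XX X) /\
  (forall X, XX X -> exists chi, X chi) /\
  (forall X, XX X -> forall chi, X chi -> inAsg P chi).

Definition isHAsg_sup (P : AP -> Prop) (XX : hset) : Prop :=
  exists Q, (forall q, P q -> Q q) /\ isHAsg Q XX.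

(* ap(XX), computed intrinsically (equals P for XX in HAsg(P)) *)
Definition ap (XX : hset) : AP -> Prop :=
  fun q => exists X chi, XX X /\ X chi /\ chi q <> None.

Definition choice_fun (XX : hset) (c : aset -> asg) : Prop :=
  forall X, XX X -> X (c X).
Definition dual (XX : hset) : hset :=
  fun Y => exists c, choice_fun XX c /\
    (forall chi, Y chi <-> exists X, XX X /\ c X = chi).

Definition par (XX XX1 XX2 : hset) : Prop :=
  forall X, (XX X <-> (XX1 X \/ XX2 X)) /\ ~ (XX1 X /\ XX2 X).

Definition nonempty (XX : hset) : Prop := exists X, XX X.

Definition fnc := asg -> tval.   (* only its values on Asg(P) matter *)

Record qspec := QSpec { PB : AP -> Prop; PS : AP -> Prop }.

(* chi1 ~^{>k}_p chi2 (strict = false) and chi1 ~^{>=k}_p chi2 (strict = true) *)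
Definition approx (P : AP -> Prop) (strict : bool) (p : AP) (k : nat)
  (chi1 chi2 : asg) : Prop :=
  (forall q, P q -> q <> p -> forall t, val chi1 q t = val chi2 q t) /\
  (forall t, (if strict then t < k else t <= k) -> val chi1 p t = val chi2 p t).

Definition behavioral_gen (P : AP -> Prop) (strict : bool) (F : fnc) (p : AP) :=
  forall k chi1 chi2, inAsg P chi1 -> inAsg P chi2 ->
    approx P strict p k chi1 chi2 -> F chi1 k = F chi2 k.

Definition behavioral P F p := behavioral_gen P false F p.
Definition strongly_behavioral P F p := behavioral_gen P true F p.

Definition fnc_sigma (sigma : qspec) (P : AP -> Prop) (F : fnc) : Prop :=
  (forall p, PB sigma p -> P p -> behavioral P F p) /\
  (forall p, PS sigma p -> P p -> strongly_behavioral P F p).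

Definition ext_set (X : aset) (F : fnc) (p : AP) : aset :=
  fun chi' => exists chi, X chi /\ chi' = upd chi p (F chi).

Definition ext_sigma (sigma : qspec) (XX : hset) (p : AP) : hset :=
  fun Y => exists X F, XX X /\ fnc_sigma sigma (ap XX) F /\
    (forall chi, Y chi <-> ext_set X F p chi).

Inductive ltl : Type :=
| LTrue : ltl
| LAtom : AP -> ltl
| LNot : ltl -> ltl
| LAnd : ltl -> ltl -> ltl
| LOr : ltl -> ltl -> ltl
| LNext : ltl -> ltl
| LUntil : ltl -> ltl -> ltl.

Fixpoint ltl_sat (w : nat -> AP -> bool) (i : nat) (psi : ltl) : Prop :=
  match psi with
  | LTrue => True
  | LAtom q => w i q = true
  | LNot a => ~ ltl_sat w i a
  | LAnd a b => ltl_sat w i a /\ ltl_sat w i b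
  | LOr a b => ltl_sat w i a \/ ltl_sat w i b
  | LNext a => ltl_sat w (S i) a
  | LUntil a b => exists j, i <= j /\ ltl_sat w j b /\
                   (forall k, i <= k -> k < j -> ltl_sat w k a)
  end.

Definition word_of (chi : asg) : nat -> AP -> bool := fun t q => val chi q t.

Definition models_ltl (chi : asg) (psi : ltl) : Prop := ltl_sat (word_of chi) 0 psi.

Fixpoint ltl_atoms (psi : ltl) : AP -> Prop :=
  match psi with
  | LTrue => fun _ => False
  | LAtom q => fun r => r = q
  | LNot a | LNext a => ltl_atoms a
  | LAnd a b | LOr a b | LUntil a b => fun r => ltl_atoms a r \/ ltl_atoms b r
  end.

Inductive gfg : Type :=
| GLtl : ltl -> gfg
| GNot : gfg -> gfg
| GAnd : gfg -> gfg -> gfg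
| GOr : gfg -> gfg -> gfg
| GEx : AP -> qspec -> gfg -> gfg
| GAll : AP -> qspec -> gfg -> gfg.

Definition is_QPTL_spec (s : qspec) := forall q, ~ PB s q /\ ~ PS s q.

Fixpoint free (phi : gfg) : AP -> Prop :=
  match phi with
  | GLtl psi => ltl_atoms psi
  | GNot a => free a
  | GAnd a b | GOr a b => fun r => free a r \/ free b r
  | GEx p _ a | GAll p _ a => fun r => free a r /\ r <> p
  end.

Inductive flag := EA | AE.

Definition flip (a : flag) : flag := match a with EA => AE | AE => EA end.

Fixpoint sem (phi : gfg) (a : flag) (XX : hset) {struct phi} : Prop :=
  match phi with
  | GLtl psi =>
      match a with
      | EA => exists X, XX X /\ forall chi, X chi -> models_ltl chi psi
      | AE => forall X, XX X -> exists chi, X chi /\ models_ltl chi psi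
      end
  | GNot b => ~ sem b (flip a) XX
  | GAnd b c =>
      let andEA := fun YY : hset => forall YY1 YY2, par YY YY1 YY2 ->
            (nonempty YY1 /\ sem b EA YY1) \/ (nonempty YY2 /\ sem c EA YY2) in
      match a with EA => andEA XX | AE => andEA (dual XX) end
  | GOr b c =>
      let orAE := fun YY : hset => exists YY1 YY2, par YY YY1 YY2 /\
            (nonempty YY1 -> sem b AE YY1) /\ (nonempty YY2 -> sem c AE YY2) in
      match a with AE => orAE XX | EA => orAE (dual XX) end
  | GEx p s b =>
      match a with
      | EA => sem b EA (ext_sigma s XX p)
      | AE => sem b EA (ext_sigma s (dual XX) p)
      end
  | GAll p s b =>
      match a with
      | AE => sem b AE (ext_sigma s XX p)
      | EA => sem b AE (ext_sigma s (dual XX) p)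
      end
  end.

Definition satisfiable (a : flag) (phi : gfg) : Prop :=
  exists XX, isHAsg (free phi) XX /\ sem phi a XX.

Definition same_free (phi psi : gfg) : Prop := forall q, free phi q <-> free psi q.

Definition implies (a : flag) (phi psi : gfg) : Prop :=
  same_free phi psi /\
  forall XX, isHAsg_sup (free phi) XX -> sem phi a XX -> sem psi a XX.

Definition equivalent (a : flag) (phi psi : gfg) : Prop :=
  same_free phi psi /\
  forall XX, isHAsg_sup (free phi) XX -> (sem phi a XX <-> sem psi a XX).

End GFG.

(* Main.v *)
Require Import Defs.
From Stdlib Require Import Classical ClassicalEpsilon FunctionalExtensionality PropExtensionality.

Lemma choice_gen {A B : Type} (b0 : B) (R : A -> B -> Prop) :
  exists f : A -> B, forall a, (exists b, R a b) -> R a (f a).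
Proof.
  exists (fun a => match excluded_middle_informative (exists b, R a b) with
                   | left h => proj1_sig (constructive_indefinite_description _ h)
                   | right _ => b0 end).
  intros a H. destruct (excluded_middle_informative _) as [h|h].
  - exact (proj2_sig (constructive_indefinite_description _ h)).
  - contradiction.
Qed.

Definition le {AP} (XX YY : hset AP) :=
  forall Y, YY Y -> exists X, XX X /\ (forall chi, X chi -> Y chi).
Definition unif {AP} (P : AP -> Prop) (XX : hset AP) :=
  forall X, XX X -> forall chi, X chi -> inAsg P chi.

Definition asg0 {AP} : asg AP := fun _ => None.

Lemma dual_anti {AP} (XX YY : hset AP) : le XX YY -> le (dual YY) (dual XX).
Proof.
  intros H Z [c [Hc HZ]].
  destruct (choice_gen (fun _ : asg AP => False)
     (fun (Y X : aset AP) => XX X /\ (forall chi, X chi -> Y chi))) as [f Hf].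
  pose (d := fun Y => c (f Y)).
  exists (fun chi => exists Y, YY Y /\ d Y = chi). split.
  - exists d. split.
    + intros Y HY. destruct (Hf Y (H Y HY)) as [H1 H2]. apply H2. apply Hc, H1.
    + intros chi; tauto.
  - intros chi [Y [HY <-]]. apply HZ. exists (f Y). split; [|reflexivity].
    apply (Hf Y (H Y HY)).
Qed.

Lemma dd_le1 {AP} (XX : hset AP) : le (dual (dual XX)) XX.
Proof.
  intros X HX.
  destruct (choice_gen (fun (_ : aset AP) => @asg0 AP)
     (fun (Y : aset AP) c => choice_fun XX c /\
        (forall chi, Y chi <-> exists X, XX X /\ c X = chi))) as [g Hg].
  pose (d := fun Y => g Y X).
  exists (fun chi => exists Y, dual XX Y /\ d Y = chi). split.
  - exists d. split.
    + intros Y HY. destruct (Hg Y HY) as [H1 H2]. apply H2. exists X; split; auto.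
    + intros chi; tauto.
  - intros chi [Y [HY <-]]. destruct (Hg Y HY) as [H1 H2]. apply H1, HX.
Qed.

Lemma dd_le2 {AP} (XX : hset AP) : le XX (dual (dual XX)).
Proof.
  intros Z [d [Hd HZ]].
  apply NNPP; intro Hn.
  assert (Hx : forall X, XX X -> exists chi, X chi /\ ~ Z chi).
  { intros X HX. apply NNPP; intro H2. apply Hn. exists X. split; auto.
    intros chi Hc. apply NNPP; intro H3. apply H2. exists chi; auto. }
  destruct (choice_gen (@asg0 AP) (fun (X : aset AP) chi => X chi /\ ~ Z chi)) as [c Hc].
  assert (HY : dual XX (fun chi => exists X, XX X /\ c X = chi)).
  { exists c. split.
    - intros X HX. apply (Hc X (Hx X HX)).
    - intros chi; tauto. }
  pose proof (Hd _ HY) as [X [HX Heq]].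
  destruct (Hc X (Hx X HX)) as [_ Hnz]. apply Hnz. rewrite Heq.
  apply HZ. exists (fun chi => exists X, XX X /\ c X = chi). auto.
Qed.

Lemma unif_dual {AP} P (XX : hset AP) : unif P XX -> unif P (dual XX).
Proof.
  intros H Y [c [Hc HY]] chi Hchi. apply HY in Hchi as [X [HX <-]].
  apply (H X HX). apply Hc, HX.
Qed.

Lemma unif_par {AP} P (XX XX1 XX2 : hset AP) : unif P XX -> par XX XX1 XX2 ->
  unif P XX1 /\ unif P XX2.
Proof.
  intros H Hp. split; intros X HX; apply H; apply (Hp X); auto.
Qed.

Lemma par_le {AP} (XX YY XX1 XX2 : hset AP) : le XX YY -> par XX XX1 XX2 ->
  exists YY1 YY2, par YY YY1 YY2 /\ le XX1 YY1 /\ le XX2 YY2.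
Proof.
  intros H Hp.
  exists (fun Y => YY Y /\ exists X, XX1 X /\ (forall chi, X chi -> Y chi)).
  exists (fun Y => YY Y /\ ~ exists X, XX1 X /\ (forall chi, X chi -> Y chi)).
  split; [|split].
  - intros Y. split; [|tauto]. split; [|tauto].
    intro HY. destruct (classic (exists X, XX1 X /\ (forall chi, X chi -> Y chi))); tauto.
  - intros Y [_ HY]. exact HY.
  - intros Y [HY Hn]. destruct (H Y HY) as [X [HX Hs]].
    exists X. split; auto. destruct (proj1 (proj1 (Hp X)) HX) as [h|h]; auto.
    exfalso; apply Hn; exists X; auto.
Qed.

Lemma le_ne {AP} (XX YY : hset AP) : le XX YY -> nonempty YY -> nonempty XX.
Proof. intros H [Y HY]. destruct (H Y HY) as [X [HX _]]. exists X; auto. Qed.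

Lemma fnc_const {AP} s (P : AP -> Prop) : fnc_sigma s P (fun _ _ => false).
Proof. split; intros p _ _ k c1 c2 _ _ _; reflexivity. Qed.

Lemma fnc_iff {AP} s (P Q : AP -> Prop) F : (forall q, P q <-> Q q) ->
  fnc_sigma s P F -> fnc_sigma s Q F.
Proof.
  intros H. assert (P = Q) as <-.
  { apply functional_extensionality; intro q; apply propositional_extensionality; auto. }
  auto.
Qed.

Lemma ap_unif {AP} P (XX : hset AP) X chi : unif P XX -> XX X -> X chi ->
  forall q, ap XX q <-> P q.
Proof.
  intros H HX Hc q. split.
  - intros [X' [c' [H1 [H2 H3]]]]. apply (H X' H1 c' H2). auto.
  - intros Hq. exists X, chi. split; [auto|split; auto]. apply (H X HX chi Hc). auto.
Qed.

Lemma ext_le {AP} P s p (XX YY : hset AP) : unif P XX -> unif P YY -> le XX YY ->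
  le (ext_sigma s XX p) (ext_sigma s YY p).
Proof.
  intros UX UY H W [Y [F [HY [HF HW]]]].
  destruct (H Y HY) as [X [HX Hs]].
  destruct (classic (exists chi, X chi)) as [[chi0 Hc0]|Hn].
  - exists (ext_set X F p). split.
    + exists X, F. split; [auto|split; [|tauto]].
      apply (fnc_iff s (ap YY)); auto.
      intro q. rewrite (ap_unif _ _ _ _ UY HY (Hs _ Hc0)). rewrite (ap_unif _ _ _ _ UX HX Hc0). tauto.
    + intros chi [c [Hc ->]]. apply HW. exists c; auto.
  - exists (ext_set X (fun _ _ => false) p). split.
    + exists X, (fun _ _ => false). split; [auto|split; [apply fnc_const|tauto]].
    + intros chi [c [Hc _]]. exfalso; apply Hn; eauto.
Qed.

Lemma unif_ext {AP} P s p (XX : hset AP) : unif P XX ->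
  unif (fun q => P q \/ q = p) (ext_sigma s XX p).
Proof.
  intros U W [X [F [HX [_ HW]]]] chi Hc. apply HW in Hc as [c [Hc ->]].
  pose proof (U X HX c Hc) as Hu.
  intro q. unfold upd. destruct (excluded_middle_informative (q = p)) as [e|e].
  - split; [discriminate|auto].
  - rewrite <- (Hu q). tauto.
Qed.

Lemma mono {AP} (phi : gfg AP) : forall P (XX YY : hset AP),
  unif P XX -> unif P YY -> le XX YY ->
  (sem phi EA YY -> sem phi EA XX) /\ (sem phi AE XX -> sem phi AE YY).
Proof.
  induction phi as [l|b IH|b IHb c IHc|b IHb c IHc|p s b IH|p s b IH];
    intros P XX YY UX UY H.
  - simpl. split.
    + intros [Y [HY Ha]]. destruct (H Y HY) as [X [HX Hs]]. exists X; split; auto.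
    + intros Ha Y HY. destruct (H Y HY) as [X [HX Hs]].
      destruct (Ha X HX) as [chi [Hc Hm]]. exists chi; auto.
  - simpl. destruct (IH P XX YY UX UY H) as [H1 H2]. split; intros Hn Hc; apply Hn; auto.
  - assert (A : forall P XX YY, unif P XX -> unif P YY -> le XX YY ->
      (forall YY1 YY2, par YY YY1 YY2 ->
            (nonempty YY1 /\ sem b EA YY1) \/ (nonempty YY2 /\ sem c EA YY2)) ->
      (forall XX1 XX2, par XX XX1 XX2 ->
            (nonempty XX1 /\ sem b EA XX1) \/ (nonempty XX2 /\ sem c EA XX2))).
    { clear UX UY H XX YY P. intros P XX YY UX UY H Ha XX1 XX2 Hp.
      destruct (par_le _ _ _ _ H Hp) as [YY1 [YY2 [Hq [H1 H2]]]].
      destruct (unif_par _ _ _ _ UX Hp) as [U1 U2]. destruct (unif_par _ _ _ _ UY Hq) as [V1 V2].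
      destruct (Ha _ _ Hq) as [[Hn Hs]|[Hn Hs]].
      - left. split. eapply le_ne; eauto. eapply (IHb P XX1 YY1); eauto.
      - right. split. eapply le_ne; eauto. eapply (IHc P XX2 YY2); eauto. }
    simpl. split.
    + apply (A P); auto.
    + apply (A P); auto using unif_dual, dual_anti.
  - assert (A : forall P XX YY, unif P XX -> unif P YY -> le XX YY ->
      (exists XX1 XX2, par XX XX1 XX2 /\
            (nonempty XX1 -> sem b AE XX1) /\ (nonempty XX2 -> sem c AE XX2)) ->
      (exists YY1 YY2, par YY YY1 YY2 /\
            (nonempty YY1 -> sem b AE YY1) /\ (nonempty YY2 -> sem c AE YY2))).
    { clear UX UY H XX YY P. intros P XX YY UX UY H [XX1 [XX2 [Hp [Ha1 Ha2]]]].
      destruct (par_le _ _ _ _ H Hp) as [YY1 [YY2 [Hq [H1 H2]]]].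
      destruct (unif_par _ _ _ _ UX Hp) as [U1 U2]. destruct (unif_par _ _ _ _ UY Hq) as [V1 V2].
      exists YY1, YY2. split; [auto|split].
      - intro Hn. eapply (IHb P XX1); eauto. apply Ha1. eapply le_ne; eauto.
      - intro Hn. eapply (IHc P XX2); eauto. apply Ha2. eapply le_ne; eauto. }
    simpl. split.
    + apply (A P); auto using unif_dual, dual_anti.
    + apply (A P); auto.
  - assert (E1 : le (ext_sigma s XX p) (ext_sigma s YY p)) by (apply (ext_le P); auto).
    assert (E2 : le (ext_sigma s (dual YY) p) (ext_sigma s (dual XX) p))
      by (apply (ext_le P); auto using unif_dual, dual_anti).
    pose proof (unif_ext _ s p _ UX). pose proof (unif_ext _ s p _ UY).
    pose proof (unif_ext _ s p _ (unif_dual _ _ UX)). pose proof (unif_ext _ s p _ (unif_dual _ _ UY)).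
    simpl. split.
    + apply (proj1 (IH _ _ _ H0 H1 E1)).
    + apply (proj1 (IH _ _ _ H3 H2 E2)).
  - assert (E1 : le (ext_sigma s XX p) (ext_sigma s YY p)) by (apply (ext_le P); auto).
    assert (E2 : le (ext_sigma s (dual YY) p) (ext_sigma s (dual XX) p))
      by (apply (ext_le P); auto using unif_dual, dual_anti).
    pose proof (unif_ext _ s p _ UX). pose proof (unif_ext _ s p _ UY).
    pose proof (unif_ext _ s p _ (unif_dual _ _ UX)). pose proof (unif_ext _ s p _ (unif_dual _ _ UY)).
    simpl. split.
    + apply (proj2 (IH _ _ _ H3 H2 E2)).
    + apply (proj2 (IH _ _ _ H0 H1 E1)).
Qed.

Lemma inv {AP} (phi : gfg AP) P (XX YY : hset AP) a :
  unif P XX -> unif P YY -> le XX YY -> le YY XX -> (sem phi a XX <-> sem phi a YY).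
Proof.
  intros U V H1 H2. destruct (mono phi P XX YY U V H1). destruct (mono phi P YY XX V U H2).
  destruct a; tauto.
Qed.

Lemma dd_inv {AP} (phi : gfg AP) P XX a : unif P XX ->
  (sem phi a XX <-> sem phi a (dual (dual XX))).
Proof.
  intro U. apply (inv phi P); auto using unif_dual, dd_le1, dd_le2.
Qed.

Lemma duality {AP} (phi : gfg AP) : forall P (XX : hset AP), unif P XX ->
  (sem phi EA XX <-> sem phi AE (dual XX)) /\ (sem phi AE XX <-> sem phi EA (dual XX)).
Proof.
  induction phi as [l|b IH|b IHb c IHc|b IHb c IHc|p s b IH|p s b IH]; intros P XX U.
  - simpl. split; split.
    + intros [X [HX Ha]] Y [c [Hc HY]]. exists (c X). split.
      * apply HY. exists X; auto.
      * apply Ha, Hc, HX.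
    + intros H. apply NNPP; intro Hn.
      assert (Hx : forall X, XX X -> exists chi, X chi /\ ~ models_ltl chi l).
      { intros X HX. apply NNPP; intro H2. apply Hn. exists X. split; auto.
        intros chi Hc. apply NNPP; intro H3. apply H2. exists chi; auto. }
      destruct (choice_gen (@asg0 AP) (fun (X : aset AP) chi => X chi /\ ~ models_ltl chi l)) as [c Hc].
      destruct (H (fun chi => exists X, XX X /\ c X = chi)) as [chi [[X [HX <-]] Hm]].
      * exists c. split; [intros X HX; apply (Hc X (Hx X HX))|intros chi; tauto].
      * apply (Hc X (Hx X HX)). auto.
    + intros H.
      destruct (choice_gen (@asg0 AP) (fun (X : aset AP) chi => X chi /\ models_ltl chi l)) as [c Hc].
      exists (fun chi => exists X, XX X /\ c X = chi). split.
      * exists c. split; [intros X HX; apply (Hc X (H X HX))|intros chi; tauto].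
      * intros chi [X [HX <-]]. apply (Hc X (H X HX)).
    + intros [Y [[c [Hc HY]] Ha]] X HX. exists (c X). split.
      * apply Hc, HX.
      * apply Ha, HY. exists X; auto.
  - simpl. destruct (IH P XX U). tauto.
  - split; [|reflexivity]. apply (dd_inv (GAnd b c) P XX EA U).
  - split; [reflexivity|]. apply (dd_inv (GOr b c) P XX AE U).
  - split; [|reflexivity]. apply (dd_inv (GEx p s b) P XX EA U).
  - split; [reflexivity|]. apply (dd_inv (GAll p s b) P XX AE U).
Qed.

Lemma dual_hasg {AP} Q (XX : hset AP) : isHAsg Q XX -> isHAsg Q (dual XX).
Proof.
  intros [[X0 H0] [Hne Hin]].
  destruct (choice_gen (@asg0 AP) (fun (X : aset AP) chi => X chi)) as [c Hc].
  split; [|split].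
  - exists (fun chi => exists X, XX X /\ c X = chi). exists c.
    split; [intros X HX; apply (Hc X (Hne X HX))|intros chi; tauto].
  - intros Y [d [Hd HY]]. exists (d X0). apply HY. exists X0; auto.
  - apply unif_dual. exact Hin.
Qed.

Lemma sup_dual {AP} Q (XX : hset AP) : isHAsg_sup Q XX -> isHAsg_sup Q (dual XX).
Proof. intros [R [HR H]]. exists R. split; auto. apply dual_hasg; auto. Qed.

Lemma sup_unif {AP} Q (XX : hset AP) : isHAsg_sup Q XX -> exists R, unif R XX.
Proof. intros [R [_ [_ [_ H]]]]. exists R; exact H. Qed.

Theorem mainTheorem10 (AP : Type) (phi psi : gfg AP) :
  (satisfiable EA phi <-> satisfiable AE phi) /\
  (implies EA phi psi <-> implies AE phi psi) /\
  (equivalent EA phi psi <-> equivalent AE phi psi).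
Proof.
  split; [|split].
  - split; intros [XX [H1 H2]]; exists (dual XX); split; auto using dual_hasg;
      destruct (duality phi _ XX (proj2 (proj2 H1))); tauto.
  - split; intros [Hf H]; split; auto; intros XX Hs Hp;
      destruct (sup_unif _ _ Hs) as [R U];
      destruct (duality phi R XX U); destruct (duality psi R XX U);
      pose proof (H (dual XX) (sup_dual _ _ Hs)); tauto.
  - split; intros [Hf H]; split; auto; intros XX Hs;
      destruct (sup_unif _ _ Hs) as [R U];
      destruct (duality phi R XX U); destruct (duality psi R XX U);
      pose proof (H (dual XX) (sup_dual _ _ Hs)); tauto.
Qed.
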